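(* Let $N=(S,T,F,M_0,\ell)$ be a plain structural conflict net. If $N$ has a fully reachable pure $\mathsf M$, then there are $\sigma\in\mathrm{Act}^*$ and $a,b,c\in\mathrm{Act}$ with $a\ne c$ such that $\langle\sigma,\{\{a,c\}\}\rangle\notin\mathcal F(N)$, $\langle\sigma,\{\{b\}\}\rangle\notin\mathcal F(N)$ and $\langle\sigma,\{\{a,b\},\{b,c\}\}\rangle\in\mathcal F(N)$.
   Context: Fix visible actions $\mathrm{Act}$ and $\tau\notin\mathrm{Act}$. A Petri net has disjoint $S,T$, $F:(S\times T)\cup(T\times S)\to\mathbb N$, $M_0\in\mathbb N^S$, $\ell:T\to\mathrm{Act}\cup\{\tau\}$. ${}^\bullet x(y)=F(y,x)$, $x^\bullet(y)=F(x,y)$, extended additively; multiset $\le,\cap,\cup$ pointwise $\le$, min, max. For finite nonempty multiset $G$ of transitions, $M[G\rangle M'$ iff ${}^\bullet G\le M$ and $M'=M-{}^\bullet G+G^\bullet$; reachable markings as usual; $t\smile u$ iff $M[\{t\}+\{u\}\rangle$ for some reachable $M$. Structural conflict net: $t\smile u\Rightarrow{}^\bullet t\cap{}^\bullet u=\emptyset$. Plain: $\ell$ injective and never $\tau$. Fully reachable pure $\mathsf M$: $t,u,v\in T$ with ${}^\bullet t\cap{}^\bullet u\ne\emptyset$, ${}^\bullet u\cap{}^\bullet v\ne\emptyset$, ${}^\bullet t\cap{}^\bullet v=\emptyset$ and a reachable $M$ with ${}^\bullet t\cup{}^\bullet u\cup{}^\bullet v\le M$. $M\xrightarrow{\alpha}M'$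 iff $M[t\rangle M'$ with $\ell(t)=\alpha$; $\Rightarrow$ reflexive transitive closure of $\xrightarrow{\tau}$; $M\overset{a_1\cdots a_n}{\Longrightarrow}M'$ iff $M\Rightarrow\xrightarrow{a_1}\Rightarrow\cdots\xrightarrow{a_n}\Rightarrow M'$. For a step $A$ (finite nonempty multiset over $\mathrm{Act}$), $M\xrightarrow{A}$ iff $M[G\rangle$ for a finite multiset $G$ of transitions, none labelled $\tau$, with label multiset $A$. $\mathcal F(N)$, the set of step failure pairs, consists of all $\langle\sigma,X\rangle$ with $\sigma\in\mathrm{Act}^*$ and $X$ a finite set of steps such that some $M$ has $M_0\overset{\sigma}{\Longrightarrow}M$, $M\not\xrightarrow{\tau}$ and $M\not\xrightarrow{A}$ for all $A\in X$. *)

(* Defs.v *)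
From Stdlib Require Import List Arith Permutation.
Import ListNotations.

(* A labelled Petri net over visible actions Act.  Places and transitions are
   separate types (hence disjoint).  The label [None] stands for tau. *)
Record net (Act : Type) := Net {
  place : Type;
  trans : Type;
  F_st : place -> trans -> nat;
  F_ts : trans -> place -> nat;
  M0 : place -> nat;
  lab : trans -> option Act
}.
Arguments place {Act}. Arguments trans {Act}. Arguments F_st {Act}.
Arguments F_ts {Act}. Arguments M0 {Act}. Arguments lab {Act}.

Section Semantics.
Context {Act : Type} (N : net Act).

Definition marking := place N -> nat.

(* preset / postset of a finite multiset of transitions, given as a list *)
Definition preG (G : list (trans N)) (s : place N) : nat :=
  fold_right (fun t acc => F_st N s t + acc) 0 G.
Definition postG (G : list (trans N)) (s : place N) : nat :=
  fold_right (fun t acc => F_ts N t s + acc) 0 G.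

Definition fires (M : marking) (G : list (trans N)) (M' : marking) : Prop :=
  G <> [] /\ (forall s, preG G s <= M s) /\
  (forall s, M' s = M s - preG G s + postG G s).

Definition enabled (M : marking) (G : list (trans N)) : Prop :=
  exists M', fires M G M'.

Inductive reachable : marking -> Prop :=
| reach0 : reachable (M0 N)
| reachS : forall M t M', reachable M -> fires M [t] M' -> reachable M'.

Definition conc (t u : trans N) : Prop :=
  exists M, reachable M /\ enabled M [t; u].

Definition structural_conflict : Prop :=
  forall t u, conc t u -> forall s, Nat.min (F_st N s t) (F_st N s u) = 0.

Definition plain : Prop :=
  (forall t u, lab N t = lab N u -> t = u) /\ (forall t, lab N t <> None).

Definition fully_reachable_pure_M : Prop :=
  exists t u v,
    (exists s, Nat.min (F_st N s t) (F_st N s u) <> 0) /\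
    (exists s, Nat.min (F_st N s u) (F_st N s v) <> 0) /\
    (forall s, Nat.min (F_st N s t) (F_st N s v) = 0) /\
    exists M, reachable M /\
      forall s, Nat.max (Nat.max (F_st N s t) (F_st N s u)) (F_st N s v) <= M s.

Definition lstep (M : marking) (alpha : option Act) (M' : marking) : Prop :=
  exists t, lab N t = alpha /\ fires M [t] M'.

Inductive tau_star : marking -> marking -> Prop :=
| tau_refl : forall M, tau_star M M
| tau_step : forall M M1 M', lstep M None M1 -> tau_star M1 M' -> tau_star M M'.

Inductive weak_trace : marking -> list Act -> marking -> Prop :=
| wt_nil : forall M M', tau_star M M' -> weak_trace M [] M'
| wt_cons : forall M M1 M2 M' a sigma,
    tau_star M M1 -> lstep M1 (Some a) M2 -> weak_trace M2 sigma M' ->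
    weak_trace M (a :: sigma) M'.

(* M --A--> for a step A (finite nonempty multiset of visible actions, as a list) *)
Definition step_enabled (M : marking) (A : list Act) : Prop :=
  exists G : list (trans N),
    (forall t, In t G -> lab N t <> None) /\
    Permutation (map (lab N) G) (map Some A) /\
    enabled M G.

(* <sigma, X> ∈ F(N), X a finite set of steps given as a list of lists *)
Definition step_failure (sigma : list Act) (X : list (list Act)) : Prop :=
  exists M, weak_trace (M0 N) sigma M /\
    (~ exists M', lstep M None M') /\
    (forall A, In A X -> ~ step_enabled M A).

End Semantics.

(* Main.v *)
Require Import Defs.
From Stdlib Require Import List Arith Lia Permutation FunctionalExtensionality.
Import ListNotations.

Section Aux.
Context {Act : Type} (N : net Act).

Lemma wt_app X s Y a Z : weak_trace N X s Y -> lstep N Y (Some a) Z ->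
  weak_trace N X (s ++ [a]) Z.
Proof.
  induction 1; intros Hl; simpl.
  - eapply wt_cons; [eassumption|eassumption|]. constructor. constructor.
  - eapply wt_cons; eauto.
Qed.

Lemma reach_trace M : plain N -> reachable N M -> exists s, weak_trace N (M0 N) s M.
Proof.
  intros [Hi Hn]. induction 1.
  - exists []. constructor. constructor.
  - destruct IHreachable as [s Hs].
    destruct (lab N t) as [a|] eqn:E; [|exfalso; exact (Hn t E)].
    exists (s ++ [a]). eapply wt_app; eauto. exists t. auto.
Qed.

Lemma tau_triv M M' : plain N -> tau_star N M M' -> M = M'.
Proof.
  intros [Hi Hn]. destruct 1; auto.
  destruct H as [t [Ht _]]. exfalso; exact (Hn t Ht).
Qed.

Lemma no_tau M : plain N -> ~ exists M', lstep N M None M'.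
Proof. intros [Hi Hn] [M' [t [Ht _]]]. exact (Hn t Ht). Qed.

Lemma wt_det X s Y Y' : plain N -> weak_trace N X s Y -> weak_trace N X s Y' -> Y = Y'.
Proof.
  intros Hp H; revert Y'; induction H; intros Y' H'; inversion H'; subst.
  - apply tau_triv in H; auto. apply tau_triv in H0; auto. congruence.
  - match goal with
    | Ha : tau_star _ M ?P, Hb : tau_star _ M ?Q, Hc : lstep _ ?Q _ ?R,
      Hd : weak_trace _ ?R _ Y' |- _ =>
      apply tau_triv in Ha; auto; apply tau_triv in Hb; auto; subst;
      apply IHweak_trace; replace M2 with R; auto;
      destruct H0 as [t1 [L1 [_ [_ F1]]]]; destruct Hc as [t2 [L2 [_ [_ F2]]]]
    end.
    destruct Hp as [Hi _]. assert (t1 = t2) by (apply Hi; congruence). subst.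
    apply functional_extensionality. intro x. rewrite F1, F2. reflexivity.
Qed.

End Aux.

Theorem lemma5p4 (Act : Type) (N : net Act) :
  plain N -> structural_conflict N -> fully_reachable_pure_M N ->
  exists (sigma : list Act) (a b c : Act),
    a <> c /\
    ~ step_failure N sigma [[a; c]] /\
    ~ step_failure N sigma [[b]] /\
    step_failure N sigma [[a; b]; [b; c]].
Proof.
  intros Hp Hsc [t [u [v [[s1 H1] [[s2 H2] [H3 [M [HM HMb]]]]]]]].
  destruct (reach_trace N M Hp HM) as [sigma Hs].
  pose proof Hp as [Hi Hn].
  destruct (lab N t) as [a|] eqn:Ea; [|exfalso; exact (Hn t Ea)].
  destruct (lab N u) as [b|] eqn:Eb; [|exfalso; exact (Hn u Eb)].
  destruct (lab N v) as [c|] eqn:Ec; [|exfalso; exact (Hn v Ec)].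
  exists sigma, a, b, c.
  assert (Hb : forall s, F_st N s t <= M s /\ F_st N s u <= M s /\ F_st N s v <= M s).
  { intro s. specialize (HMb s). lia. }
  split; [|split; [|split]].
  - intro E; subst c. assert (t = v) by (apply Hi; congruence). subst v.
    apply H1. specialize (H3 s1). lia.
  - intros [M' [Hw [_ HX]]]. pose proof (wt_det N _ _ _ _ Hp Hs Hw). subst M'.
    apply (HX [a; c]); [left; auto|].
    exists [t; v]. split; [intros x [<-|[<-|[]]]; congruence|].
    split; [simpl; rewrite Ea, Ec; apply Permutation_refl|].
    exists (fun s => M s - preG N [t;v] s + postG N [t;v] s).
    split; [congruence|split; auto].
    intro s. unfold preG; simpl. specialize (H3 s). specialize (Hb s). lia.
  - intros [M' [Hw [_ HX]]]. pose proof (wt_det N _ _ _ _ Hp Hs Hw). subst M'.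
    apply (HX [b]); [left; auto|].
    exists [u]. split; [intros x [<-|[]]; congruence|].
    split; [simpl; rewrite Eb; apply Permutation_refl|].
    exists (fun s => M s - preG N [u] s + postG N [u] s).
    split; [congruence|split; auto].
    intro s. unfold preG; simpl. specialize (Hb s). lia.
  - exists M. split; [exact Hs|split; [apply no_tau; auto|]].
    assert (Hno : forall x y, (forall s, F_st N s x + F_st N s y <= M s) ->
               forall s, Nat.min (F_st N s x) (F_st N s y) = 0).
    { intros x y Hxy. apply Hsc. exists M. split; auto.
      exists (fun s => M s - preG N [x;y] s + postG N [x;y] s).
      split; [congruence|split; auto].
      intro s. unfold preG; simpl. specialize (Hxy s). lia. }
    intros A HA [G [HG [HP [M' [HGn [Hpre Hpost]]]]]].
    assert (HL : length G = 2).
    { apply Permutation_length in HP. rewrite !length_map in HP.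
      destruct HA as [<-|[<-|[]]]; auto. }
    destruct G as [|x [|y [|]]]; simpl in HL; try discriminate.
    simpl in HP. apply Permutation_length_2_inv in HP.
    unfold preG in Hpre; simpl in Hpre.
    destruct HA as [<-|[<-|[]]]; simpl in HP;
      destruct HP as [HP|HP]; inversion HP as [[Lx Ly]];
      try (assert (x = t) by (apply Hi; congruence));
      try (assert (y = t) by (apply Hi; congruence));
      try (assert (x = u) by (apply Hi; congruence));
      try (assert (y = u) by (apply Hi; congruence));
      try (assert (x = v) by (apply Hi; congruence));
      try (assert (y = v) by (apply Hi; congruence));
      subst.
    + apply H1. apply Hno. intro s; specialize (Hpre s); lia.
    + apply H1. rewrite Nat.min_comm. apply Hno. intro s; specialize (Hpre s); lia.
    + apply H2. apply Hno. intro s; specialize (Hpre s); lia.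
    + apply H2. rewrite Nat.min_comm. apply Hno. intro s; specialize (Hpre s); lia.
Qed.
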